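(* In a realisation of a local affine Gaudin model (setting below), let $\mathcal P(z)=\sum_{\alpha\in\Sigma}\sum_{p=0}^{m_\alpha-1}\frac{\mathcal D^\alpha_{[p]}}{(z-z_\alpha)^{p+1}}$ and $\mathcal H(z)=\frac12\int_{\mathbb D}dx\,\kappa\big(\Gamma(z,x),\Gamma(z,x)\big)-\varphi(z)\mathcal P(z)$. Then, as a rational function of $z$, $\mathcal H(z)$ has at each $z_\alpha$ a pole of order at most $m_\alpha$.
   Context: $\mathfrak g$: finite-dimensional simple complex Lie algebra, $\kappa$: minus its Killing form, $C_{12}=I_a\otimes I^a$ for dual bases w.r.t. $\kappa$; $\mathfrak g_0$: real form, fixed points of an antilinear involution $\tau$. $\mathbb D$ is $\mathbb R$ or the circle; $\delta'_{xy}=\partial_x\delta(x-y)$. Data: a finite set of sites $\Sigma=\Sigma_r\sqcup\Sigma_c\sqcup\bar\Sigma_c$ (real sites, complex sites, their conjugates $\bar\alpha$), multiplicities $m_\alpha\ge1$ ($m_{\bar\alpha}=m_\alpha$), levels $\ell^\alpha_{[p]}$, $0\le p\le m_\alpha-1$ (real for real sites, $\ell^{\bar\alpha}_{[p]}=\overline{\ell^\alpha_{[p]}}$), with $\ell^\alpha_{[m_\alpha-1]}\neq0$; pairwise distinct positions $z_\alpha$ (real for real sites, $z_{\bar\alpha}=\overline{z_\alpha}$); a real $\ell^\infty\neq0$. A realisation is a Poisson algebra $\mathcal A$ of local observables of a field theory on $\mathbb D$ containing $\mathfrak g$-valued fields $\mathcal J^\alpha_{[p]}(x)$ with $\{\mathcal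 J^\alpha_{[p]}{}_1(x),\mathcal J^\beta_{[q]}{}_2(y)\}=\delta_{\alpha\beta}([C_{12},\mathcal J^\alpha_{[p+q]}{}_1(x)]\delta_{xy}-\ell^\alpha_{[p+q]}C_{12}\delta'_{xy})$ if $p+q<m_\alpha$ and $0$ otherwise, with reality conditions $\tau(\mathcal J^\alpha_{[p]})=\mathcal J^\alpha_{[p]}$ (real $\alpha$), $\tau(\mathcal J^\alpha_{[p]})=\mathcal J^{\bar\alpha}_{[p]}$ (complex $\alpha$). Twist function $\varphi(z)=\sum_{\alpha\in\Sigma}\sum_{p=0}^{m_\alpha-1}\frac{\ell^\alpha_{[p]}}{(z-z_\alpha)^{p+1}}-\ell^\infty$; Gaudin Lax matrix $\Gamma(z,x)=\sum_\alpha\sum_p\frac{\mathcal J^\alpha_{[p]}(x)}{(z-z_\alpha)^{p+1}}$. For each $\alpha$, $\eta^\alpha_{[p]}$ ($0\le p\le 2m_\alpha-2$) denotes the unique solution of $\sum_{p=0}^{m_\alpha-1-r}\eta^\alpha_{[p+q]}\ell^\alpha_{[p+r]}=\delta_{q,r}$ for all $q,r\in\{0,\dots,m_\alpha-1\}$, and $\mathcal D^\alpha_{[p]}=\frac12\sum_{q,r=0,\,q+r\ge p}^{m_\alpha-1}\eta^\alpha_{[q+r-p]}\int_{\mathbb D}dx\,\kappa(\mathcal J^\alpha_{[q]}(x),\mathcal J^\alpha_{[r]}(x))$ (generalised Segal-Sugawara integrals). *)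

(* Defs.v *)
From HB Require Import structures.
From mathcomp Require Import all_boot all_order all_algebra.
Set Implicit Arguments. Unset Strict Implicit. Unset Printing Implicit Defensive.
Import Order.TTheory GRing.Theory Num.Theory.
Local Open Scope ring_scope.

(* Generic conventions:
   C : numClosedFieldType  -- the complex numbers (with conjugation x^* ).
   S : finType              -- the finite set of sites Sigma.
   F : lmodType C           -- the space of g-valued fields x |-> X(x) of the realisation.
   A : lmodType C           -- the algebra of local observables (as a C-vector space).
   B : F -> F -> A          -- B X Y = \int_D dx kappa(X(x), Y(x)).                    *)

Section Gaudin.
Variables (C : numClosedFieldType) (S : finType) (F A : lmodType C).
Variables (m : S -> nat) (lev : S -> nat -> C) (zp : S -> C) (linf : C).
Variables (J : S -> nat -> F) (B : F -> F -> A) (eta : S -> nat -> C).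

Definition twist (z : C) : C :=
  \sum_(a : S) \sum_(p < m a) lev a p / (z - zp a) ^+ p.+1 - linf.

Definition gaudinLax (z : C) : F :=
  \sum_(a : S) \sum_(p < m a) ((z - zp a) ^+ p.+1)^-1 *: J a p.

Definition segalSugawara (a : S) (p : nat) : A :=
  2^-1 *: \sum_(q < m a) \sum_(r < m a | (p <= q + r)%N)
            eta a (q + r - p)%N *: B (J a q) (J a r).

Definition calP (z : C) : A :=
  \sum_(a : S) \sum_(p < m a) ((z - zp a) ^+ p.+1)^-1 *: segalSugawara a p.

Definition calH (z : C) : A :=
  2^-1 *: B (gaudinLax z) (gaudinLax z) - twist z *: calP z.

End Gaudin.

(* An A-valued rational function H (given by its values off a finite set) has at z0
   a pole of order at most k: (z - z0)^k H(z) agrees, off a finite set, with an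
   A-valued rational function regular at z0, i.e. a finite sum sum_j (P_j/Q_j)(z) a_j
   with Q_j(z0) <> 0. *)
Definition pole_order_le (C : numClosedFieldType) (A : lmodType C)
  (H : C -> A) (z0 : C) (k : nat) : Prop :=
  exists (E : seq C) (n : nat) (P Q : 'I_n -> {poly C}) (v : 'I_n -> A),
    (forall j, (Q j).[z0] != 0) /\
    forall z, z \notin E ->
      (z - z0) ^+ k *: H z = \sum_(j < n) ((P j).[z] / (Q j).[z]) *: v j.

(* Main.v *)
Require Import Defs.
From HB Require Import structures.
From mathcomp Require Import all_boot all_order all_algebra.
From mathcomp Require Import zify ring.
Set Implicit Arguments. Unset Strict Implicit. Unset Printing Implicit Defensive.
Import Order.TTheory GRing.Theory Num.Theory.
Local Open Scope ring_scope.


Section Reg.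
Variables (C : numClosedFieldType) (A : lmodType C) (z0 : C).

Definition RegS (c : C -> C) : Prop :=
  exists (E : seq C) (p q : {poly C}), q.[z0] != 0 /\
    forall z, z \notin E -> q.[z] != 0 /\ c z = p.[z] / q.[z].

Definition Reg (f : C -> A) : Prop :=
  exists (E : seq C) (n : nat) (P Q : 'I_n -> {poly C}) (v : 'I_n -> A),
    (forall j, (Q j).[z0] != 0) /\
    forall z, z \notin E ->
      f z = \sum_(j < n) ((P j).[z] / (Q j).[z]) *: v j.

Lemma RegS_ext (E0 : seq C) c d : (forall z, z \notin E0 -> c z = d z) -> RegS d -> RegS c.
Proof.
move=> H [E [p [q [Hq Hd]]]]; exists (E0 ++ E), p, q; split=> // z.
by rewrite mem_cat negb_or => /andP [h1 h2]; rewrite H //; apply: Hd.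
Qed.

Lemma RegS_poly p : RegS (fun z => p.[z]).
Proof. by exists [::], p, 1; split=> [|z _]; rewrite ?hornerC ?oner_eq0 ?divr1. Qed.

Lemma RegS_const x : RegS (fun _ => x).
Proof. by apply: (@RegS_ext [::] _ (fun z => x%:P.[z])) => [z _|]; rewrite ?hornerC //; apply: RegS_poly. Qed.

Lemma RegS_mul c d : RegS c -> RegS d -> RegS (fun z => c z * d z).
Proof.
move=> [E1 [p1 [q1 [Hq1 H1]]]] [E2 [p2 [q2 [Hq2 H2]]]].
exists (E1 ++ E2), (p1 * p2), (q1 * q2); split.
  by rewrite hornerM mulf_neq0.
move=> z; rewrite mem_cat negb_or => /andP [/H1 [n1 e1] /H2 [n2 e2]].
by rewrite e1 e2 !hornerM invfM mulrACA mulf_neq0.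
Qed.

Lemma RegS_add c d : RegS c -> RegS d -> RegS (fun z => c z + d z).
Proof.
move=> [E1 [p1 [q1 [Hq1 H1]]]] [E2 [p2 [q2 [Hq2 H2]]]].
exists (E1 ++ E2), (p1 * q2 + p2 * q1), (q1 * q2); split.
  by rewrite hornerM mulf_neq0.
move=> z; rewrite mem_cat negb_or => /andP [/H1 [n1 e1] /H2 [n2 e2]].
rewrite e1 e2 !hornerE mulf_neq0 //; split=> //; field.
by rewrite n1 n2.
Qed.

End Reg.


Section Reg2.
Variables (C : numClosedFieldType) (A : lmodType C) (z0 : C).

Lemma RegS_sum (I : Type) (r : seq I) (c : I -> C -> C) :
  (forall i, RegS z0 (c i)) -> RegS z0 (fun z => \sum_(i <- r) c i z).
Proof.
move=> H; elim: r => [|i r IH].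
  by apply: (@RegS_ext _ _ [::] _ (fun _ => 0)) => [z _|]; rewrite ?big_nil //; apply: RegS_const.
apply: (@RegS_ext _ _ [::] _ (fun z => c i z + \sum_(j <- r) c j z)) => [z _|].
  by rewrite big_cons.
exact: RegS_add.
Qed.

Lemma RegS_inv zb n : zb != z0 -> RegS z0 (fun z => ((z - zb) ^+ n)^-1).
Proof.
move=> Hb; exists [:: zb], 1, (('X - zb%:P) ^+ n); split.
  by rewrite horner_exp hornerXsubC expf_neq0 // subr_eq0 eq_sym.
move=> z; rewrite inE => Hz; rewrite horner_exp hornerXsubC hornerC mul1r.
by rewrite expf_neq0 // subr_eq0.
Qed.

Lemma RegS_wpow k n : (n <= k)%N -> RegS z0 (fun z => (z - z0) ^+ k * ((z - z0) ^+ n)^-1).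
Proof.
move=> Hn; apply: (@RegS_ext _ _ [:: z0] _ (fun z => (('X - z0%:P) ^+ (k - n)).[z])).
  move=> z; rewrite inE => Hz; rewrite horner_exp hornerXsubC expfB_cond //.
  by rewrite (negbTE (_ : z - z0 != 0)) ?add0n // subr_eq0.
exact: RegS_poly.
Qed.

Lemma Reg_ext (E0 : seq C) (f g : C -> A) :
  (forall z, z \notin E0 -> f z = g z) -> @Reg C A z0 g -> @Reg C A z0 f.
Proof.
move=> H [E [n [P [Q [v [HQ Hg]]]]]]; exists (E0 ++ E), n, P, Q, v; split=> // z.
by rewrite mem_cat negb_or => /andP [h1 h2]; rewrite H // Hg.
Qed.

Lemma Reg0 : @Reg C A z0 (fun _ => 0).
Proof.
by exists [::], 0%N, (fun _ => 0), (fun _ => 1), (fun _ => 0); split=> [j|z _]; [case: j | rewrite big_ord0].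
Qed.

Lemma RegD f g : @Reg C A z0 f -> @Reg C A z0 g -> @Reg C A z0 (fun z => f z + g z).
Proof.
move=> [E1 [n1 [P1 [Q1 [v1 [HQ1 H1]]]]]] [E2 [n2 [P2 [Q2 [v2 [HQ2 H2]]]]]].
pose sel (T : Type) (x1 : 'I_n1 -> T) (x2 : 'I_n2 -> T) (i : 'I_(n1 + n2)) :=
  match split i with inl j => x1 j | inr j => x2 j end.
exists (E1 ++ E2), (n1 + n2)%N, (sel _ P1 P2), (sel _ Q1 Q2), (sel _ v1 v2); split.
  by move=> i; rewrite /sel; case: (split i).
move=> z; rewrite mem_cat negb_or => /andP [h1 h2].
rewrite H1 // H2 // big_split_ord /sel /=.
congr (_ + _); apply: eq_bigr => i _.
  by rewrite (unsplitK (inl _ i)).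
by rewrite (unsplitK (inr _ i)).
Qed.

Lemma RegZ c f : RegS z0 c -> @Reg C A z0 f -> @Reg C A z0 (fun z => c z *: f z).
Proof.
move=> [E1 [p [q [Hq Hc]]]] [E2 [n [P [Q [v [HQ Hf]]]]]].
exists (E1 ++ E2), n, (fun j => p * P j), (fun j => q * Q j), v; split.
  by move=> j; rewrite hornerM mulf_neq0.
move=> z; rewrite mem_cat negb_or => /andP [/Hc [_ ->] h2].
rewrite Hf // scaler_sumr; apply: eq_bigr => j _.
by rewrite scalerA !hornerM invfM mulrACA.
Qed.

Lemma Reg_vec c (v : A) : RegS z0 c -> @Reg C A z0 (fun z => c z *: v).
Proof.
move=> Hc; apply: (@Reg_ext [::] _ (fun z => c z *: (fun _ => v) z)) => // .
apply: RegZ => //.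
exists [::], 1%N, (fun _ => 1), (fun _ => 1), (fun _ => v); split=> [j|z _].
  by rewrite hornerC oner_eq0.
by rewrite big_ord1 hornerC divr1 scale1r.
Qed.

Lemma Reg_sum (I : Type) (r : seq I) (f : I -> C -> A) :
  (forall i, @Reg C A z0 (f i)) -> @Reg C A z0 (fun z => \sum_(i <- r) f i z).
Proof.
move=> H; elim: r => [|i r IH].
  by apply: (@Reg_ext [::] _ (fun _ => 0)) => [z _|]; rewrite ?big_nil //; apply: Reg0.
apply: (@Reg_ext [::] _ (fun z => f i z + \sum_(j <- r) f j z)) => [z _|].
  by rewrite big_cons.
exact: RegD.
Qed.

End Reg2.


Lemma sum_pick (R : nmodType) n (x : nat) (g : nat -> R) :
  \sum_(i < n) (if i == x :> nat then g i else 0) = if (x < n)%N then g x else 0.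
Proof.
elim: n => [|n IH]; first by rewrite big_ord0.
rewrite big_ord_recr /= IH.
case: (eqVneq n x) => [<-|Hne]; first by rewrite ltnn add0r ltnSn.
have -> : (x < n.+1)%N = (x < n)%N.
  by rewrite ltnS leq_eqVlt (eq_sym x n) (negbTE Hne).
by rewrite addr0.
Qed.

Section Comb.
Variables (C : numClosedFieldType) (k : nat) (l eta : nat -> C).
Hypothesis Heta : forall (q r : nat), (q < k)%N -> (r < k)%N ->
     \sum_(p < k - r) eta (p + q)%N * l (p + r)%N = (q == r)%:R.

Lemma HetaR q r : (q < k)%N -> (r < k)%N ->
  \sum_(s < k) (if (r <= s)%N then l s * eta (s - r + q)%N else 0) = (q == r)%:R.
Proof.
move=> Hq Hr; rewrite -(Heta Hq Hr) -(big_mkord xpredT (fun s => if (r <= s)%N then l s * eta (s - r + q)%N else 0)).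
rewrite (big_cat_nat (n := r)) //=; last by apply: ltnW.
rewrite big1_seq ?add0r; last first.
  by move=> i; rewrite mem_index_iota => Hi; case: ifP => // ?; lia.
rewrite -{1}(add0n r) big_addn -(big_mkord xpredT (fun p => eta (p + q)%N * l (p + r)%N)).
apply: eq_bigr => i _; rewrite leq_addl mulrC; congr (_ * _); congr eta; lia.
Qed.

Definition cpoly (T : nat) : {poly C} :=
  'X^(T.+2) - \sum_(s < k) \sum_(p < k | (p <= T)%N) (l s * eta (T - p)) *: 'X^((s + p).+2).

Lemma cpoly_size T : (T.+2 <= k + k)%N -> (size (cpoly T) <= k.+1)%N.
Proof.
move=> HT; apply/leq_sizeP => j Hj.
rewrite coefB coefXn coef_sum.
have k1 : (1 <= k)%N by lia.
have [N eN] : exists N, j = N.+2 by exists (j - 2)%N; lia.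
subst j.
have E1 : forall s : 'I_k, (\sum_(p < k | (p <= T)%N) (l s * eta (T - p)) *: ('X^((s + p).+2) : {poly C}))`_N.+2
   = if ((N - s < k)%N && (N - s <= T)%N) then l s * eta (T - (N - s)) else 0.
  move=> s; rewrite coef_sum big_mkcond /=.
  rewrite (eq_bigr (fun p : 'I_k => if p == (N - s)%N :> nat then (if (N - s <= T)%N then l s * eta (T - (N - s)) else 0) else 0)); last first.
    move=> p _; rewrite coefZ coefXn !eqSS.
    have -> : (N == s + p)%N = (p == (N - s)%N :> nat) by apply/eqP/eqP; have := ltn_ord s; lia.
    by case: eqP => [->|]; case: ifP; rewrite ?mulr1 ?mulr0.
  by rewrite (@sum_pick _ k (N - s)%N (fun _ => if (N - s <= T)%N then l s * eta (T - (N - s)) else 0)); case: (N - s < k)%N.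
rewrite (eq_bigr _ (fun s _ => E1 s)).
case: (boolP (([&& (T.+1 < k)%N & (k <= N - T)%N]) || (k + k <= N.+1)%N)) => Hc.
  rewrite big1 ?subr0; first by rewrite !eqSS (_ : (N == T) = false) //; apply/eqP; lia.
  by move=> s _; case: ifP => // /andP [h1 h2]; have := ltn_ord s; lia.
have gen : forall q r, (q < k)%N -> (r < k)%N -> (N == T) = (q == r) ->
   (forall s : 'I_k, ((N - s < k)%N && (N - s <= T)%N) = (r <= s)%N) ->
   (forall s : 'I_k, (r <= s)%N -> (T - (N - s))%N = (s - r + q)%N) ->
   (N.+2 == T.+2)%:R - \sum_(s < k) (if ((N - s < k)%N && (N - s <= T)%N) then l s * eta (T - (N - s)) else 0) = 0 :> C.
  move=> q r Hq Hr HNT Hc1 Hc2.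
  rewrite (eq_bigr (fun s : 'I_k => if (r <= s)%N then l s * eta (s - r + q)%N else 0)).
    by rewrite HetaR // !eqSS HNT subrr.
  by move=> s _; rewrite Hc1; case: ifP => // /Hc2 ->.
case: (leqP k T.+1) => HTk.
  apply: (gen (T.+1 - k) (N.+1 - k))%N; try lia.
  by move=> s Hs; have := ltn_ord s; lia.
apply: (gen 0 (N - T))%N; try lia.
by move=> s Hs; have := ltn_ord s; lia.
Qed.
End Comb.


Lemma RegS_revpoly (C : numClosedFieldType) (z0 : C) k (p : {poly C}) :
  (size p <= k.+1)%N -> RegS z0 (fun z => (z - z0) ^+ k * p.[(z - z0)^-1]).
Proof.
move=> Hs.
apply: (@RegS_ext _ _ [::] _ (fun z => \sum_(i < k.+1) p`_i * ((z - z0) ^+ k * ((z - z0) ^+ i)^-1))).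
  move=> z _; rewrite (horner_coef_wide _ Hs) mulr_sumr; apply: eq_bigr => i _.
  by rewrite exprVn mulrCA.
apply: RegS_sum => i; apply: RegS_mul; first exact: RegS_const.
by apply: RegS_wpow; rewrite -ltnS.
Qed.

Section Bil.
Variables (C : numClosedFieldType) (F A : lmodType C) (B : F -> F -> A).
Hypothesis HB_lin : forall (c : C) X Y Z, B (c *: X + Y) Z = c *: B X Z + B Y Z.
Hypothesis HB_sym : forall X Y, B X Y = B Y X.

Lemma B0l Z : B 0 Z = 0.
Proof.
have := HB_lin 1 0 0 Z; rewrite scale1r addr0 scale1r => h.
by apply: (addrI (B 0 Z)); rewrite addr0 -h.
Qed.

Lemma BDl X Y Z : B (X + Y) Z = B X Z + B Y Z.
Proof. by rewrite -{1}(scale1r X) HB_lin scale1r. Qed.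

Lemma BZl c X Z : B (c *: X) Z = c *: B X Z.
Proof. by rewrite -(addr0 (c *: X)) HB_lin B0l addr0. Qed.

Lemma BZr c X Z : B Z (c *: X) = c *: B Z X.
Proof. by rewrite HB_sym BZl HB_sym. Qed.

Lemma B_suml (I : Type) (r : seq I) (P : pred I) (X : I -> F) Z :
  B (\sum_(i <- r | P i) X i) Z = \sum_(i <- r | P i) B (X i) Z.
Proof. exact: (big_morph (fun Y => B Y Z) (fun x y => BDl x y Z) (B0l Z)). Qed.

Lemma B_sumr (I : Type) (r : seq I) (P : pred I) (X : I -> F) Z :
  B Z (\sum_(i <- r | P i) X i) = \sum_(i <- r | P i) B Z (X i).
Proof. by rewrite HB_sym B_suml; apply: eq_bigr => i _; rewrite HB_sym. Qed.

Lemma B_expand (I1 I2 : Type) (r1 : seq I1) (r2 : seq I2) (c1 : I1 -> C) (c2 : I2 -> C) X Y :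
  B (\sum_(i <- r1) c1 i *: X i) (\sum_(j <- r2) c2 j *: Y j) =
  \sum_(i <- r1) \sum_(j <- r2) (c1 i * c2 j) *: B (X i) (Y j).
Proof.
rewrite B_suml; apply: eq_bigr => i _; rewrite BZl B_sumr scaler_sumr.
by apply: eq_bigr => j _; rewrite BZr scalerA.
Qed.

End Bil.


Section Special.
Variables (C : numClosedFieldType) (F A : lmodType C) (B : F -> F -> A).
Hypothesis HB_lin : forall (c : C) X Y Z, B (c *: X + Y) Z = c *: B X Z + B Y Z.
Hypothesis HB_sym : forall X Y, B X Y = B Y X.
Variables (k : nat) (l eta : nat -> C) (Jv : nat -> F) (z0 : C).
Hypothesis Heta : forall (q r : nat), (q < k)%N -> (r < k)%N ->
     \sum_(p < k - r) eta (p + q)%N * l (p + r)%N = (q == r)%:R.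

Lemma special_id z :
  let G := \sum_(p < k) ((z - z0) ^+ p.+1)^-1 *: Jv p in
  let D := fun p : nat => 2^-1 *: \sum_(q < k) \sum_(r < k | (p <= q + r)%N)
            eta (q + r - p)%N *: B (Jv q) (Jv r) in
  (z - z0) ^+ k *: (2^-1 *: B G G -
     (\sum_(s < k) l s / (z - z0) ^+ s.+1) *: \sum_(p < k) ((z - z0) ^+ p.+1)^-1 *: D p)
  = 2^-1 *: \sum_(q < k) \sum_(r < k)
      ((z - z0) ^+ k * (cpoly k l eta (q + r)).[(z - z0)^-1]) *: B (Jv q) (Jv r).
Proof.
move=> G D; rewrite /G (B_expand HB_lin HB_sym).
set w := z - z0.
pose f (q r s p : 'I_k) : C := if (p <= q + r)%N then
      l s / w ^+ s.+1 * ((w ^+ p.+1)^-1 * (2^-1 * eta (q + r - p)%N)) else 0.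
have E2 : (\sum_(s < k) l s / w ^+ s.+1) *: \sum_(p < k) (w ^+ p.+1)^-1 *: D p =
   \sum_(q < k) \sum_(r < k) (\sum_(s < k) \sum_(p < k) f q r s p) *: B (Jv q) (Jv r).
  transitivity (\sum_(s < k) \sum_(p < k) \sum_(q < k) \sum_(r < k) f q r s p *: B (Jv q) (Jv r)).
    rewrite scaler_suml; apply: eq_bigr => s _; rewrite scaler_sumr; apply: eq_bigr => p _.
    rewrite /D !scaler_sumr; apply: eq_bigr => q _; rewrite big_mkcond !scaler_sumr.
    apply: eq_big => // r _; rewrite /f; case: ifP => _; rewrite ?scaler0 ?scale0r // !scalerA.
    by rewrite !mulrA.
  symmetry.
  transitivity (\sum_(q < k) \sum_(r < k) \sum_(s < k) \sum_(p < k) f q r s p *: B (Jv q) (Jv r)).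
    apply: eq_bigr => q _; apply: eq_bigr => r _; rewrite scaler_suml; apply: eq_bigr => s _.
    by rewrite scaler_suml.
  transitivity (\sum_(q < k) \sum_(s < k) \sum_(p < k) \sum_(r < k) f q r s p *: B (Jv q) (Jv r)).
    apply: eq_bigr => q _; rewrite exchange_big; apply: eq_bigr => s _; by rewrite exchange_big.
  rewrite exchange_big; apply: eq_bigr => s _; by rewrite exchange_big.
rewrite E2.
rewrite !scaler_sumr -sumrB scaler_sumr; apply: eq_bigr => q _.
rewrite !scaler_sumr -sumrB scaler_sumr; apply: eq_bigr => r _.
rewrite !scalerA -scalerBl scalerA; congr (_ *: _).
rewrite /cpoly !hornerE horner_sum.
have -> : \sum_(s < k) \sum_(p < k) f q r s p = 2^-1 *
   \sum_(i < k) (\sum_(p < k | (p <= q + r)%N) (l i * eta (q + r - p)%N) *: 'X^((i + p).+2)).[w^-1].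
  rewrite mulr_sumr; apply: eq_bigr => s _; rewrite horner_sum mulr_sumr [RHS]big_mkcond.
  apply: eq_bigr => p _ /=; rewrite /f; case: ifP => _; rewrite ?mulr0 //.
  rewrite hornerZ hornerXn -!exprVn -addSn -addnS exprD; ring.
rewrite -!exprVn -addSn -addnS exprD.
rewrite /GRing.GRing_mul__canonical__SemiGroup_Law /=. ring.
Qed.
End Special.


Lemma RegB (C : numClosedFieldType) (A : lmodType C) (z0 : C) (f g : C -> A) :
  Reg z0 f -> Reg z0 g -> Reg z0 (fun z => f z - g z).
Proof.
move=> Hf Hg; apply: (@Reg_ext _ _ _ [::] _ (fun z => f z + (fun _ => -1) z *: g z)).
  by move=> z _; rewrite scaleN1r.
by apply: RegD => //; apply: RegZ => //; apply: RegS_const.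
Qed.

Lemma RegS_w (C : numClosedFieldType) (z0 : C) k : RegS z0 (fun z => (z - z0) ^+ k).
Proof.
apply: (@RegS_ext _ _ [::] _ (fun z => (('X - z0%:P) ^+ k).[z])).
  by move=> z _; rewrite horner_exp hornerXsubC.
exact: RegS_poly.
Qed.

Unset Implicit Arguments.
Set Strict Implicit.

Theorem propositionA1
  (C : numClosedFieldType) (S : finType) (F A : lmodType C)
  (bar : S -> S) (m : S -> nat) (lev : S -> nat -> C) (zp : S -> C) (linf : C)
  (J : S -> nat -> F) (B : F -> F -> A) (eta : S -> nat -> C)
  (* data of the local affine Gaudin model *)
  (Hbar : forall a, bar (bar a) = a)
  (Hm_pos : forall a, (0 < m a)%N)
  (Hm_bar : forall a, m (bar a) = m a)
  (Hlev_bar : forall a p, lev (bar a) p = (lev a p)^*)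
  (Hlev_top : forall a, lev a (m a).-1 != 0)
  (Hzp_bar : forall a, zp (bar a) = (zp a)^*)
  (Hzp_inj : injective zp)
  (Hlinf_real : linf^* = linf)
  (Hlinf : linf != 0)
  (* B X Y = \int_D dx kappa(X(x), Y(x)) : symmetric bilinear *)
  (HB_lin : forall (c : C) X Y Z, B (c *: X + Y) Z = c *: B X Z + B Y Z)
  (HB_sym : forall X Y, B X Y = B Y X)
  (* eta^a is the solution of the triangular system *)
  (Heta : forall a (q r : nat), (q < m a)%N -> (r < m a)%N ->
     \sum_(p < m a - r) eta a (p + q)%N * lev a (p + r)%N = (q == r)%:R) :
  forall a : S, pole_order_le (calH m lev zp linf J B eta) (zp a) (m a).
Proof.
move=> a.
pose c (b : S) (p : nat) (z : C) := ((z - zp b) ^+ p.+1)^-1.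
have KEY1 : forall b (p : 'I_(m b)), RegS (zp a) (fun z => (z - zp a) ^+ m a * c b p z).
  move=> b p; case: (eqVneq b a) => [Eb|Nb].
    subst b; apply: RegS_wpow; exact: ltn_ord.
  apply: RegS_mul; first exact: RegS_w.
  by apply: RegS_inv; apply/eqP => /Hzp_inj; apply/eqP.
have KEY : forall b d (p : 'I_(m b)) (q : 'I_(m d)), ~~ ((b == a) && (d == a)) ->
    RegS (zp a) (fun z => (z - zp a) ^+ m a * (c b p z * c d q z)).
  move=> b d p q; case: (eqVneq b a) => [Eb|Nb] /= Hd.
    apply: (@RegS_ext _ _ [::] _ (fun z => ((z - zp a) ^+ m a * c b p z) * c d q z)).
      by move=> z _; rewrite mulrA.
    apply: RegS_mul; first exact: KEY1.
    by apply: RegS_inv; apply/eqP => /Hzp_inj /eqP; apply/negP.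
  apply: (@RegS_ext _ _ [::] _ (fun z => c b p z * ((z - zp a) ^+ m a * c d q z))).
    by move=> z _; rewrite mulrCA.
  apply: RegS_mul; last exact: KEY1.
  by apply: RegS_inv; apply/eqP => /Hzp_inj; apply/eqP.
pose G b z := \sum_(p < m b) c b p z *: J b p.
pose Phi b z := \sum_(s < m b) lev b s / (z - zp b) ^+ s.+1.
pose Pc b z := \sum_(p < m b) c b p z *: segalSugawara m J B eta b p.
pose w z := (z - zp a) ^+ m a.
have DEC : forall z, w z *: calH m lev zp linf J B eta z =
   \sum_b \sum_d w z *: (2^-1 *: B (G b z) (G d z) - Phi b z *: Pc d z)
   + linf *: (w z *: calP m zp J B eta z).
  move=> z; rewrite /calH /gaudinLax /twist /calP.
  rewrite (B_suml HB_lin) scalerBl.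
  under eq_bigr do rewrite (B_sumr HB_lin HB_sym).
  rewrite scaler_suml.
  have eq3 : forall x y t : A, x - (y - t) = (x - y) + t.
    by move=> x y t; rewrite opprB addrA addrAC.
  rewrite eq3 scalerDr; congr (_ + _); last first.
    by rewrite !scalerA mulrC.
  rewrite !scaler_sumr -sumrB scaler_sumr; apply: eq_bigr => b _.
  rewrite !scaler_sumr -sumrB scaler_sumr; apply: eq_bigr => d _.
  by [].
change (Reg (zp a) (fun z => w z *: calH m lev zp linf J B eta z)).
apply: (@Reg_ext _ _ _ [::] _ (fun z => \sum_b \sum_d w z *: (2^-1 *: B (G b z) (G d z) - Phi b z *: Pc d z)
   + linf *: (w z *: calP m zp J B eta z))); first by move=> z _; exact: DEC.
apply: RegD.
  apply: Reg_sum => b; apply: Reg_sum => d.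
  case: (boolP ((b == a) && (d == a))) => [/andP [/eqP -> /eqP ->] | Hbd].
    apply: (@Reg_ext _ _ _ [::] _ (fun z => 2^-1 *: \sum_(q < m a) \sum_(r < m a)
      ((z - zp a) ^+ m a * (cpoly (m a) (lev a) (eta a) (q + r)).[(z - zp a)^-1]) *: B (J a q) (J a r))).
      by move=> z _; exact: (special_id HB_lin HB_sym (m a) (lev a) (eta a) (J a) (zp a) z).
    apply: RegZ; first exact: RegS_const.
    apply: Reg_sum => q; apply: Reg_sum => r; apply: Reg_vec; apply: RegS_revpoly.
    apply: cpoly_size; first exact: Heta.
    by have := ltn_ord q; have := ltn_ord r; lia.
  apply: (@Reg_ext _ _ _ [::] _ (fun z =>
     \sum_(p < m b) \sum_(q < m d) (2^-1 * (w z * (c b p z * c d q z))) *: B (J b p) (J d q)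
     - \sum_(s < m b) \sum_(p < m d) (lev b s * (w z * (c b s z * c d p z))) *: segalSugawara m J B eta d p)).
    move=> z _; rewrite scalerBr; congr (_ - _).
      rewrite /G (B_expand HB_lin HB_sym) scalerA scaler_sumr; apply: eq_bigr => p _.
      rewrite scaler_sumr; apply: eq_bigr => q _; rewrite scalerA; congr (_ *: _).
      by rewrite /c; ring.
    rewrite /Phi /Pc scaler_suml scaler_sumr; apply: eq_bigr => s _.
    rewrite !scaler_sumr; apply: eq_bigr => p _; rewrite !scalerA; congr (_ *: _).
    by rewrite /c /w; ring.
  apply: RegB.
    apply: Reg_sum => p; apply: Reg_sum => q; apply: Reg_vec; apply: RegS_mul; first exact: RegS_const.
    exact: KEY.
  apply: Reg_sum => s; apply: Reg_sum => p; apply: Reg_vec; apply: RegS_mul; first exact: RegS_const.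
  exact: KEY.
apply: RegZ; first exact: RegS_const.
apply: (@Reg_ext _ _ _ [::] _ (fun z =>
     \sum_d \sum_(p < m d) (w z * c d p z) *: segalSugawara m J B eta d p)).
  move=> z _; rewrite /calP scaler_sumr; apply: eq_bigr => d _.
  by rewrite scaler_sumr; apply: eq_bigr => p _; rewrite scalerA.
apply: Reg_sum => d; apply: Reg_sum => p; apply: Reg_vec; exact: KEY1.
Qed.
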